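(* Let $p>2$ be a prime and let $\mathrm{GF}(p)=\{0,1,\dots,p-1\}$ be the prime field. Let $J\ge 1$ and let $C_1,\dots,C_J$ be $J$ pairwise disjoint additive inverse element pairs (AIEPs) over $\mathrm{GF}(p)$, i.e. $C_i=(a_i,\,p-a_i)$ with $a_i\in\mathrm{GF}(p)\setminus\{0\}$ and the sets $\{a_i,p-a_i\}$, $1\le i\le J$, pairwise disjoint. Consider the Cartesian product $\Psi=C_1\times C_2\times\cdots\times C_J$, whose elements (codewords) are the $2^J$ tuples $(u_1,\dots,u_J)$ with $u_i\in\{a_i,p-a_i\}$. Then $\Psi$ is a $J$-user uniquely decodable AIEP (UD-AIEP) code, i.e. the map $(u_1,\dots,u_J)\mapsto \bigoplus_{i=1}^J u_i$ (sum modulo $p$) is injective on $\Psi$, if and only if the finite-field sum-patterns $\bigoplus_{i=1}^J u_i$ of all $2^J$ codewords of $\Psi$ are pairwise distinct nonzero elements of $\mathrm{GF}(p)$; and in that case $J\le \log_2(p-1)$.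
   Context: An additive inverse element pair (AIEP) over $\mathrm{GF}(p)$ is an ordered pair $(j,p-j)$ consisting of a nonzero element $j$ and its additive inverse $p-j$; since $p>2$, $j\neq p-j$. For a tuple $(u_1,\dots,u_J)$ of field elements, its finite-field sum-pattern (FFSP) is the modulo-$p$ sum $\bigoplus_{i=1}^J u_i\in\mathrm{GF}(p)$. The Cartesian product $C_1\times\cdots\times C_J$ is said to have the unique sum-pattern mapping (USPM) property, and is then called a $J$-user UD-AIEP code, if distinct tuples in it have distinct FFSPs. *)

(* Defs.v *)
From HB Require Import structures.
From mathcomp Require Import all_boot all_order all_algebra.
Set Implicit Arguments. Unset Strict Implicit. Unset Printing Implicit Defensive.
Import GRing.Theory.
Local Open Scope ring_scope.

(* The AIEP (a, p - a) viewed as the set {a, p - a} = {a, -a} in GF(p). *)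
Definition aiep (p : nat) (a : 'F_p) : {set 'F_p} := [set a; - a].

Definition codewords (p J : nat) (a : 'I_J -> 'F_p) : {set {ffun 'I_J -> 'F_p}} :=
  [set u : {ffun 'I_J -> 'F_p} | [forall i, u i \in aiep (a i)]].

Definition ffsp (p J : nat) (u : {ffun 'I_J -> 'F_p}) : 'F_p := \sum_(i < J) u i.

Definition UD_AIEP (p J : nat) (a : 'I_J -> 'F_p) : Prop :=
  {in codewords a &, injective (@ffsp p J)}.

(* Main.v *)
Require Import Defs.
From mathcomp Require Import all_boot all_order all_algebra.
Import GRing.Theory.
Local Open Scope ring_scope.

Lemma neg_ne (p : nat) (x : 'F_p) : prime p -> (2 < p)%N -> x != 0 -> x != - x.
Proof.
move=> pp p2 x0; apply/negP => /eqP E.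
have : x * 2%:R = 0 by rewrite mulr_natr mulr2n {1}E addNr.
move/eqP; rewrite mulf_eq0 (negbTE x0) /= => /eqP H.
have := val_Fp_nat pp 2; rewrite H /= modn_small //.
Qed.

Theorem theorem1 (p J : nat) (a : 'I_J -> 'F_p) :
  prime p -> (2 < p)%N -> (1 <= J)%N ->
  (forall i, a i != 0) ->
  (forall i j, i != j -> [disjoint aiep (a i) & aiep (a j)]) ->
  (UD_AIEP a <->
     ((forall u v, u \in codewords a -> v \in codewords a -> u != v ->
         ffsp u != ffsp v) /\
      (forall u, u \in codewords a -> ffsp u != 0)))
  /\ (UD_AIEP a -> (2 ^ J <= p.-1)%N).
Proof.
move=> pp p2 J1 a0 _.
have memC u : (u \in codewords a) = [forall i, u i \in aiep (a i)].
  by rewrite inE.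
have UDsum : UD_AIEP a -> forall u, u \in codewords a -> ffsp u != 0.
  move=> UD u uC; apply/negP => /eqP s0.
  pose v := [ffun i => - u i].
  have vC : v \in codewords a.
    rewrite memC; apply/forallP => i; rewrite ffunE /aiep !inE.
    move: uC; rewrite memC => /forallP /(_ i); rewrite /aiep !inE.
    by case/orP => /eqP ->; rewrite ?opprK eqxx ?orbT.
  have sv : ffsp v = ffsp u.
    by rewrite /ffsp (eq_bigr (fun i => - u i)) ?sumrN -/(ffsp u) ?s0 ?oppr0 // => i _; rewrite ffunE.
  have := UD u v uC vC (esym sv) => E.
  pose i0 : 'I_J := Ordinal J1.
  have ui0 : u i0 != 0.
    move: uC; rewrite memC => /forallP /(_ i0); rewrite /aiep !inE.
    by case/orP => /eqP ->; rewrite ?oppr_eq0 a0.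
  have := @neg_ne p _ pp p2 ui0; rewrite {2}E ffunE opprK eqxx //.
split.
  split.
    move=> UD; split; last exact: UDsum.
    move=> u v uC vC; apply: contra => /eqP H; apply/eqP; exact: UD.
  case=> H _ u v uC vC E; apply/eqP; apply: contraT => ne.
  by have := H u v uC vC ne; rewrite E eqxx.
move=> UD.
pose f (b : {ffun 'I_J -> bool}) : {ffun 'I_J -> 'F_p} :=
  [ffun i => if b i then a i else - a i].
have fC b : f b \in codewords a.
  rewrite memC; apply/forallP => i; rewrite ffunE /aiep !inE.
  by case: (b i); rewrite eqxx ?orbT.
have ginj : injective (fun b => ffsp (f b)).
  move=> b1 b2 E; have := UD _ _ (fC b1) (fC b2) E => F.
  apply/ffunP => i; have := congr1 (fun g : {ffun 'I_J -> 'F_p} => g i) F; rewrite /f !ffunE.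
  have ne := @neg_ne p _ pp p2 (a0 i).
  case: (b1 i); case: (b2 i) => // H.
    by case/eqP: ne.
  by case/eqP: ne.
have H1 : #|[set ffsp (f b) | b : {ffun 'I_J -> bool}]| = #|{ffun 'I_J -> bool}|.
  by rewrite (card_imset _ ginj).
have H2 : [set ffsp (f b) | b : {ffun 'I_J -> bool}] \subset [set~ (0%R : 'F_p)].
  apply/subsetP => x /imsetP [b _ ->]; rewrite in_setC1; exact: UDsum (fC b).
have := subset_leq_card H2; rewrite H1 card_ffun cardsC1 card_bool card_ord.
by have /= -> := card_Fp pp.
Qed.
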